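(* Let $\gamma=(\gamma_1,\gamma_2,\gamma_3):[a,b]\to\mathbb G$ be a Euclidean $C^2$-smooth regular curve and $t\in[a,b]$. Write $\omega(\dot\gamma(t))=\frac{\dot\gamma_2}{\gamma_1}-\dot\gamma_3$. (i) If $\omega(\dot\gamma(t))\ne0$, then $k^\infty_\gamma=\lim_{L\to+\infty}k^L_\gamma$ exists at $t$ and $$k^\infty_\gamma=\frac{\sqrt{\dot\gamma_1^2+\dot\gamma_2^2}}{|\gamma_1|\,|\omega(\dot\gamma(t))|}.$$ (ii) If $\omega(\dot\gamma(t))=0$ and $\frac{d}{dt}\omega(\dot\gamma(t))=0$, then the limit exists and, with $S=\big(\frac{\dot\gamma_1}{\gamma_1}\big)^2+\dot\gamma_3^2$, $$k^\infty_\gamma=\left\{\left[\Big(\frac{\ddot\gamma_1\gamma_1-\dot\gamma_1^2}{\gamma_1^2}\Big)^2+\ddot\gamma_3^2\right]S^{-2}-\left[\frac{\ddot\gamma_1\dot\gamma_1\gamma_1-\dot\gamma_1^3}{\gamma_1^3}+\dot\gamma_3\ddot\gamma_3\right]^2S^{-3}\right\}^{1/2}.$$ (iii) If $\omega(\dot\gamma(t))=0$ and $\frac{d}{dt}\omega(\dot\gamma(t))\ne0$, then $$\lim_{L\to+\infty}\frac{k^L_\gamma}{\sqrt L}=\frac{\big|\frac{d}{dt}\omega(\dot\gamma(t))\big|}{\big(\frac{\dot\gamma_1}{\gamma_1}\big)^2+\dot\gamma_3^2}.$$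
   Context: $\mathbb G=(0,\infty)\times\mathbb R^2$ is the affine group with coordinates $(x_1,x_2,x_3)$ and law $(a,b,c)\star(x,y,z)=(ax,ay+b,z+c)$. Let $X_1=x_1\partial_{x_1}$, $X_2=x_1\partial_{x_2}+\partial_{x_3}$, $X_3=x_1\partial_{x_2}$ with dual forms $\omega_1=x_1^{-1}dx_1$, $\omega_2=dx_3$, $\omega=x_1^{-1}dx_2-dx_3$. For $L>0$, $g_L=\omega_1\otimes\omega_1+\omega_2\otimes\omega_2+L\,\omega\otimes\omega$ with Levi-Civita connection $\nabla^L$, inner product $\langle\cdot,\cdot\rangle_L$ and norm $\|\cdot\|_L$. A curve is regular if $\dot\gamma\neq0$ everywhere. The curvature of $\gamma$ at $\gamma(t)$ is $$k^L_\gamma=\sqrt{\frac{\|\nabla^L_{\dot\gamma}\dot\gamma\|_L^2}{\|\dot\gamma\|_L^4}-\frac{\langle\nabla^L_{\dot\gamma}\dot\gamma,\dot\gamma\rangle_L^2}{\|\dot\gamma\|_L^6}},$$ and $k^\infty_\gamma:=\lim_{L\to+\infty}k^L_\gamma$ when it exists. *)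

(* Defs.v *)
From Stdlib Require Import Reals.
From Coquelicot Require Import Coquelicot.
Open Scope R_scope.

(* Points of G = (0,oo) x R^2 and tangent vectors are coordinate vectors
   indexed by 0,1,2 (coordinates x1,x2,x3). *)
Definition vec := nat -> R.
Definition sum3 (f : nat -> R) : R := f 0%nat + f 1%nat + f 2%nat.

Definition om1 (x : vec) (i : nat) : R :=
  match i with 0%nat => / x 0%nat | _ => 0 end.
Definition om2 (x : vec) (i : nat) : R :=
  match i with 2%nat => 1 | _ => 0 end.
Definition om (x : vec) (i : nat) : R :=
  match i with 1%nat => / x 0%nat | 2%nat => -1 | _ => 0 end.

Definition gL (L : R) (x : vec) (i j : nat) : R :=
  om1 x i * om1 x j + om2 x i * om2 x j + L * (om x i * om x j).

Definition upd (x : vec) (k : nat) (s : R) : vec :=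
  fun i => if Nat.eqb i k then s else x i.

Definition dgL (L : R) (x : vec) (k i j : nat) : R :=
  Derive (fun s => gL L (upd x k s) i j) (x k).

(* generic inverse of a 3x3 matrix via the adjugate (indices mod 3) *)
Definition m3 (i : nat) : nat := Nat.modulo i 3.
Definition cof3 (m : nat -> nat -> R) (i j : nat) : R :=
  m (m3 (i+1)) (m3 (j+1)) * m (m3 (i+2)) (m3 (j+2))
  - m (m3 (i+1)) (m3 (j+2)) * m (m3 (i+2)) (m3 (j+1)).
Definition det3 (m : nat -> nat -> R) : R :=
  sum3 (fun j => m 0%nat j * cof3 m 0%nat j).
Definition inv3 (m : nat -> nat -> R) (i j : nat) : R :=
  cof3 m j i / det3 m.

Definition christoffel (L : R) (x : vec) (k i j : nat) : R :=
  sum3 (fun l => inv3 (gL L x) k l *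
    ((dgL L x i j l + dgL L x j i l - dgL L x l i j) / 2)).

Definition cpt (g1 g2 g3 : R -> R) (t : R) : vec :=
  fun i => match i with 0%nat => g1 t | 1%nat => g2 t | _ => g3 t end.
Definition cvel (g1 g2 g3 : R -> R) (t : R) : vec :=
  fun i => match i with 0%nat => Derive g1 t | 1%nat => Derive g2 t
                        | _ => Derive g3 t end.
Definition cacc (g1 g2 g3 : R -> R) (t : R) : vec :=
  fun i => match i with 0%nat => Derive (Derive g1) t
                        | 1%nat => Derive (Derive g2) t
                        | _ => Derive (Derive g3) t end.

Definition covacc (L : R) (g1 g2 g3 : R -> R) (t : R) : vec :=
  fun k => cacc g1 g2 g3 t k +
    sum3 (fun i => sum3 (fun j =>
      christoffel L (cpt g1 g2 g3 t) k i j
        * cvel g1 g2 g3 t i * cvel g1 g2 g3 t j)).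

Definition ipL (L : R) (x : vec) (u w : vec) : R :=
  sum3 (fun i => sum3 (fun j => gL L x i j * u i * w j)).
Definition normL (L : R) (x : vec) (u : vec) : R := sqrt (ipL L x u u).

Definition kL (L : R) (g1 g2 g3 : R -> R) (t : R) : R :=
  let x := cpt g1 g2 g3 t in
  let v := cvel g1 g2 g3 t in
  let A := covacc L g1 g2 g3 t in
  sqrt (normL L x A ^ 2 / normL L x v ^ 4 - ipL L x A v ^ 2 / normL L x v ^ 6).

Definition omv (g1 g2 g3 : R -> R) (t : R) : R :=
  Derive g2 t / g1 t - Derive g3 t.

(* Main.v *)
Require Import Defs.
From Stdlib Require Import Reals.
From Coquelicot Require Import Coquelicot.
Open Scope R_scope.
From Stdlib Require Import Lra.

Lemma ipL_frame L x u w : ipL L x u w =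
  (u 0%nat / x 0%nat) * (w 0%nat / x 0%nat) + u 2%nat * w 2%nat
  + L * ((u 1%nat / x 0%nat - u 2%nat) * (w 1%nat / x 0%nat - w 2%nat)).
Proof. unfold ipL, sum3, gL, om1, om2, om; simpl; unfold Rdiv; ring. Qed.

Definition dom1 (x0 : R) (i : nat) : R := match i with 0%nat => - / x0 ^ 2 | _ => 0 end.
Definition domf (x0 : R) (i : nat) : R := match i with 1%nat => - / x0 ^ 2 | _ => 0 end.
Definition Dg L x0 i j := dom1 x0 i * om1 (fun _ => x0) j + om1 (fun _ => x0) i * dom1 x0 j
  + L * (domf x0 i * om (fun _ => x0) j + om (fun _ => x0) i * domf x0 j).
Definition D L x0 (k i j : nat) := match k with 0%nat => Dg L x0 i j | _ => 0 end.

Lemma cst_der (c x0 : R) : is_derive (fun _ : R => c) x0 0.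
Proof. auto_derive; auto. Qed.

Lemma om1_der x0 i : x0 <> 0 -> is_derive (fun s => om1 (fun _ => s) i) x0 (dom1 x0 i).
Proof. intros H. destruct i as [|i]; simpl.
 - auto_derive; auto. field; auto.
 - apply cst_der. Qed.
Lemma om2_der x0 i : is_derive (fun s : R => om2 (fun _ => s) i) x0 0.
Proof. change (is_derive (fun _ => om2 (fun _ => x0) i) x0 0). apply cst_der. Qed.
Lemma om_der x0 i : x0 <> 0 -> is_derive (fun s => om (fun _ => s) i) x0 (domf x0 i).
Proof. intros H. destruct i as [|[|[|i]]]; simpl; try apply cst_der.
 auto_derive; auto. field; auto. Qed.

Lemma dgL_eq L x k i j : x 0%nat <> 0 -> dgL L x k i j = D L (x 0%nat) k i j.
Proof. intros H. unfold dgL. destruct k as [|k].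
 - apply is_derive_unique.
   change (is_derive (fun s => gL L (fun _ => s) i j) (x 0%nat) (Dg L (x 0%nat) i j)).
   unfold gL, Dg.
   pose proof (om1_der _ i H) as Hi. pose proof (om1_der _ j H) as Hj.
   pose proof (om_der _ i H) as Ki. pose proof (om_der _ j H) as Kj.
   pose proof (om2_der (x 0%nat) i) as Mi. pose proof (om2_der (x 0%nat) j) as Mj.
   pose proof (is_derive_mult _ _ _ _ _ Hi Hj Rmult_comm) as P1.
   pose proof (is_derive_mult _ _ _ _ _ Mi Mj Rmult_comm) as P2.
   pose proof (is_derive_mult _ _ _ _ _ Ki Kj Rmult_comm) as P3.
   pose proof (is_derive_scal _ _ L _ P3) as P3'.
   pose proof (is_derive_plus _ _ _ _ _ (is_derive_plus _ _ _ _ _ P1 P2) P3') as P.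
   simpl in P. unfold plus, mult, scal in P; simpl in P. unfold mult in P; simpl in P.
   replace (dom1 (x 0%nat) i * om1 (fun _ : nat => x 0%nat) j +
      om1 (fun _ : nat => x 0%nat) i * dom1 (x 0%nat) j +
      L * (domf (x 0%nat) i * om (fun _ : nat => x 0%nat) j +
       om (fun _ : nat => x 0%nat) i * domf (x 0%nat) j)) with
     (dom1 (x 0%nat) i * om1 (fun _ : nat => x 0%nat) j +
      om1 (fun _ : nat => x 0%nat) i * dom1 (x 0%nat) j +
      (0 * om2 (fun _ : nat => x 0%nat) j + om2 (fun _ : nat => x 0%nat) i * 0) +
      L * (domf (x 0%nat) i * om (fun _ : nat => x 0%nat) j +
       om (fun _ : nat => x 0%nat) i * domf (x 0%nat) j)) by ring.
   exact P.
 - apply is_derive_unique.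
   change (is_derive (fun s => gL L x i j) (x (S k)) 0). apply cst_der.
Qed.

Lemma det_eq L x : det3 (gL L x) = L * (/ x 0%nat) ^ 4.
Proof. unfold det3, sum3, cof3, m3, gL, om1, om2, om; simpl; ring. Qed.

Section S.
Variables (g1 g2 g3 : R -> R) (t L : R).
Hypothesis HL : L <> 0.
Hypothesis HX : g1 t <> 0.
Let X := g1 t.
Let d1 := Derive g1 t. Let d2 := Derive g2 t. Let d3 := Derive g3 t.
Let dd1 := Derive (Derive g1) t. Let dd2 := Derive (Derive g2) t. Let dd3 := Derive (Derive g3) t.
Let a1 := d1 / X. Let a2 := d3. Let a3 := d2 / X - d3.

Lemma covacc0 : covacc L g1 g2 g3 t 0%nat / X = (dd1 / X - d1 ^ 2 / X ^ 2) + L * a3 * (a2 + a3).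
Proof.
  assert (Hx : cpt g1 g2 g3 t 0%nat <> 0) by exact HX.
  unfold covacc, christoffel, sum3. rewrite !(dgL_eq _ _ _ _ _ Hx).
  unfold inv3; rewrite !det_eq.
  unfold cof3, m3, D, Dg, dom1, domf, gL, om1, om2, om, cpt, cvel, cacc; simpl.
  unfold a1, a2, a3, X, d1, d2, d3, dd1. field. auto.
Qed.

Lemma covacc2 : covacc L g1 g2 g3 t 2%nat = dd3 - L * a1 * a3.
Proof.
  assert (Hx : cpt g1 g2 g3 t 0%nat <> 0) by exact HX.
  unfold covacc, christoffel, sum3. rewrite !(dgL_eq _ _ _ _ _ Hx).
  unfold inv3; rewrite !det_eq.
  unfold cof3, m3, D, Dg, dom1, domf, gL, om1, om2, om, cpt, cvel, cacc; simpl.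
  unfold a1, a2, a3, X, d1, d2, d3, dd3. field. auto.
Qed.

Lemma covacc1 : covacc L g1 g2 g3 t 1%nat / X - covacc L g1 g2 g3 t 2%nat
   = (dd2 / X - d1 * d2 / X ^ 2 - dd3) - a1 * a3.
Proof.
  assert (Hx : cpt g1 g2 g3 t 0%nat <> 0) by exact HX.
  unfold covacc, christoffel, sum3. rewrite !(dgL_eq _ _ _ _ _ Hx).
  unfold inv3; rewrite !det_eq.
  unfold cof3, m3, D, Dg, dom1, domf, gL, om1, om2, om, cpt, cvel, cacc; simpl.
  unfold a1, a2, a3, X, d1, d2, d3, dd2, dd3. field. auto.
Qed.
End S.

Definition Nf L X d1 d2 d3 dd1 dd2 dd3 :=
  let a1 := d1 / X in let a2 := d3 in let a3 := d2 / X - d3 in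
  let F1 := (dd1 / X - d1 ^ 2 / X ^ 2) + L * a3 * (a2 + a3) in
  let F2 := dd3 - L * a1 * a3 in
  let F3 := (dd2 / X - d1 * d2 / X ^ 2 - dd3) - a1 * a3 in
  let N := F1 * F1 + F2 * F2 + L * (F3 * F3) in
  let V := a1 * a1 + a2 * a2 + L * (a3 * a3) in
  let P := F1 * a1 + F2 * a2 + L * (F3 * a3) in
  N / V ^ 2 - P ^ 2 / V ^ 3.

Lemma kL_formula g1 g2 g3 t L : 0 < L -> g1 t <> 0 ->
  kL L g1 g2 g3 t = sqrt (Nf L (g1 t) (Derive g1 t) (Derive g2 t) (Derive g3 t)
     (Derive (Derive g1) t) (Derive (Derive g2) t) (Derive (Derive g3) t)).
Proof.
  intros HL HX.
  pose proof (covacc0 g1 g2 g3 t L ltac:(lra) HX) as E0.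
  pose proof (covacc1 g1 g2 g3 t L ltac:(lra) HX) as E1.
  pose proof (covacc2 g1 g2 g3 t L ltac:(lra) HX) as E2.
  unfold kL, normL. rewrite !ipL_frame.
  change (cpt g1 g2 g3 t 0%nat) with (g1 t).
  change (cvel g1 g2 g3 t 0%nat) with (Derive g1 t).
  change (cvel g1 g2 g3 t 1%nat) with (Derive g2 t).
  change (cvel g1 g2 g3 t 2%nat) with (Derive g3 t).
  rewrite E0, E1, E2.
  set (q := sqrt _).
  assert (Hq : forall y, 0 <= y -> sqrt y ^ 4 = y ^ 2 /\ sqrt y ^ 6 = y ^ 3 /\ sqrt y ^ 2 = y).
  { intros y Hy. pose proof (pow2_sqrt y Hy). repeat split.
    - replace (sqrt y ^ 4) with ((sqrt y ^ 2) ^ 2) by ring. now rewrite H.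
    - replace (sqrt y ^ 6) with ((sqrt y ^ 2) ^ 3) by ring. now rewrite H.
    - exact H. }
  unfold q.
  match goal with |- sqrt (sqrt ?a ^ 2 / sqrt ?b ^ 4 - _ / sqrt ?c ^ 6) = _ =>
    assert (Ha : 0 <= a) by (apply Rplus_le_le_0_compat; [apply Rplus_le_le_0_compat; apply Rle_0_sqr|apply Rmult_le_pos; [lra|apply Rle_0_sqr]]);
    assert (Hb : 0 <= b) by (apply Rplus_le_le_0_compat; [apply Rplus_le_le_0_compat; apply Rle_0_sqr|apply Rmult_le_pos; [lra|apply Rle_0_sqr]]) end.
  destruct (Hq _ Ha) as (_ & _ & ->). destruct (Hq _ Hb) as (-> & -> & _).
  unfold Nf. reflexivity.
Qed.

Lemma lim_inv_sqrt (F h : R -> R) :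
  (forall L, 0 < L -> F L = h (/ L)) -> ex_derive h 0 -> 0 <= h 0 ->
  is_lim (fun L => sqrt (F L)) p_infty (sqrt (h 0)).
Proof.
  intros HF Hd H0.
  apply is_lim_ext_loc with (fun L => sqrt (h (/ L))).
  { exists 0. intros L HL. now rewrite HF. }
  apply (is_lim_comp (fun u => sqrt (h u)) Rinv p_infty (sqrt (h 0)) 0).
  - apply (is_lim_continuity (fun u => sqrt (h u)) 0).
    change (continuity_pt (comp sqrt h) 0).
    apply (continuity_pt_comp h sqrt 0).
    + apply continuity_pt_filterlim. apply (ex_derive_continuous h 0 Hd).
    + now apply continuity_pt_sqrt.
  - replace (Finite 0) with (Rbar_inv p_infty) by reflexivity.
    apply (is_lim_inv (fun x => x) p_infty p_infty). apply is_lim_id. discriminate.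
  - exists 0. intros y Hy E. injection E. apply Rinv_neq_0_compat. lra.
Qed.

Definition h1 X d1 d2 d3 dd1 dd2 dd3 u :=
  let a1 := d1 / X in let a2 := d3 in let a3 := d2 / X - d3 in
  let e1 := dd1 / X - d1 ^ 2 / X ^ 2 in let e2 := dd3 in
  let e3 := dd2 / X - d1 * d2 / X ^ 2 - dd3 in
  let c1 := a3 * (a2 + a3) in let c2 := a1 * a3 in let f3 := e3 - a1 * a3 in
  let s0 := a1 * a1 + a2 * a2 in
  let Nn := (u * e1 + c1) ^ 2 + (u * e2 - c2) ^ 2 + u * (f3 * f3) in
  let Vv := u * s0 + a3 * a3 in
  let Pp := u * (e1 * a1 + e2 * a2) + (c1 * a1 - c2 * a2 + f3 * a3) in
  Nn / Vv ^ 2 - u * Pp ^ 2 / Vv ^ 3.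

Lemma case1_eq X d1 d2 d3 dd1 dd2 dd3 L : X <> 0 -> 0 < L -> d2 / X - d3 <> 0 ->
  Nf L X d1 d2 d3 dd1 dd2 dd3 = h1 X d1 d2 d3 dd1 dd2 dd3 (/ L).
Proof.
  intros HX HL Hw. unfold Nf, h1.
  set (a3 := d2 / X - d3). set (a1 := d1 / X).
  assert (H3 : 0 < a3 * a3) by (apply Rsqr_pos_lt; exact Hw).
  assert (HV : a1 * a1 + d3 * d3 + L * (a3 * a3) <> 0).
  { assert (0 <= a1 * a1) by apply Rle_0_sqr. assert (0 <= d3 * d3) by apply Rle_0_sqr.
    assert (0 < L * (a3 * a3)) by (apply Rmult_lt_0_compat; lra). lra. }
  assert (HVv : / L * (a1 * a1 + d3 * d3) + a3 * a3 <> 0).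
  { assert (0 <= a1 * a1) by apply Rle_0_sqr. assert (0 <= d3 * d3) by apply Rle_0_sqr.
    assert (0 < / L) by (apply Rinv_0_lt_compat; lra).
    assert (0 <= / L * (a1 * a1 + d3 * d3)) by (apply Rmult_le_pos; lra). lra. }
  field. repeat split; auto; lra.
Qed.

Lemma case1_h0 X d1 d2 d3 dd1 dd2 dd3 : X <> 0 -> d2 / X - d3 <> 0 ->
  h1 X d1 d2 d3 dd1 dd2 dd3 0 = (d1 ^ 2 + d2 ^ 2) / (X * (d2 / X - d3)) ^ 2.
Proof. intros HX Hw. unfold h1. field. split; auto. intro E; apply Hw; replace d2 with (d3 * X) by lra; field; auto. Qed.

Lemma case1_der X d1 d2 d3 dd1 dd2 dd3 : X <> 0 -> d2 / X - d3 <> 0 ->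
  ex_derive (h1 X d1 d2 d3 dd1 dd2 dd3) 0.
Proof. intros HX Hw. unfold h1. auto_derive. 
  replace (0 * (d1 / X * (d1 / X) + d3 * d3) + (d2 / X - d3) * (d2 / X - d3)) with ((d2 / X - d3) * (d2 / X - d3)) by ring.
  assert (H2 : (d2 / X - d3) * (d2 / X - d3) <> 0) by (apply Rmult_integral_contrapositive; auto). repeat first [split | apply Rmult_integral_contrapositive]; auto; lra. Qed.

Lemma case2_eq X d1 d2 d3 dd1 dd2 dd3 L : X <> 0 -> 0 < L ->
  d2 / X - d3 = 0 -> dd2 / X - d1 * d2 / X ^ 2 - dd3 = 0 -> (d1 / X) ^ 2 + d3 ^ 2 <> 0 ->
  Nf L X d1 d2 d3 dd1 dd2 dd3 =
  (((dd1 * X - d1 ^ 2) / X ^ 2) ^ 2 + dd3 ^ 2) / ((d1 / X) ^ 2 + d3 ^ 2) ^ 2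
   - ((dd1 * d1 * X - d1 ^ 3) / X ^ 3 + d3 * dd3) ^ 2 / ((d1 / X) ^ 2 + d3 ^ 2) ^ 3.
Proof.
  intros HX HL Hw He HS.
  assert (E2 : d2 = d3 * X) by (replace d2 with ((d2 / X) * X) by (field; auto); nra).
  subst d2.
  assert (E3 : dd2 = (dd3 + d1 * (d3 * X) / X ^ 2) * X) by (replace dd2 with ((dd2 / X) * X) by (field; auto); nra).
  subst dd2.
  unfold Nf.
  assert (HS' : d1 / X * (d1 / X) + d3 * d3 + L * ((d3 * X / X - d3) * (d3 * X / X - d3)) = (d1 / X) ^ 2 + d3 ^ 2) by (field; auto).
  rewrite HS'. field. split; auto. intro E. apply HS.
  replace ((d1 / X) ^ 2 + d3 ^ 2) with ((d1 ^ 2 + (d3 * X) ^ 2) / X ^ 2) by (field; auto).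
  rewrite E. unfold Rdiv. ring.
Qed.

Definition h3 X d1 d3 dd1 dd3 e3 u :=
  let a1 := d1 / X in let a2 := d3 in let e1 := dd1 / X - d1 ^ 2 / X ^ 2 in
  let s0 := a1 * a1 + a2 * a2 in let P := e1 * a1 + dd3 * a2 in
  u * (e1 * e1 + dd3 * dd3) / s0 ^ 2 + e3 * e3 / s0 ^ 2 - u * P ^ 2 / s0 ^ 3.

Lemma case3_eq X d1 d2 d3 dd1 dd2 dd3 L : X <> 0 -> 0 < L ->
  d2 / X - d3 = 0 -> (d1 / X) ^ 2 + d3 ^ 2 <> 0 ->
  Nf L X d1 d2 d3 dd1 dd2 dd3 / L = h3 X d1 d3 dd1 dd3 (dd2 / X - d1 * d2 / X ^ 2 - dd3) (/ L).
Proof.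
  intros HX HL Hw HS.
  assert (E2 : d2 = d3 * X) by (replace d2 with ((d2 / X) * X) by (field; auto); nra).
  subst d2.
  unfold Nf, h3.
  assert (HS' : d1 / X * (d1 / X) + d3 * d3 + L * ((d3 * X / X - d3) * (d3 * X / X - d3)) = (d1 / X) ^ 2 + d3 ^ 2) by (field; auto).
  assert (HS'' : d1 / X * (d1 / X) + d3 * d3 = (d1 / X) ^ 2 + d3 ^ 2) by ring.
  rewrite HS', HS''. field. split; [auto|split; [lra|]]. intro E; apply HS.
  replace ((d1 / X) ^ 2 + d3 ^ 2) with ((d1 ^ 2 + (d3 * X) ^ 2) / X ^ 2) by (field; auto).
  rewrite E. unfold Rdiv. ring.
Qed.

Lemma case3_h0 X d1 d3 dd1 dd3 e3 : X <> 0 -> (d1 / X) ^ 2 + d3 ^ 2 <> 0 ->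
  h3 X d1 d3 dd1 dd3 e3 0 = (e3 / ((d1 / X) ^ 2 + d3 ^ 2)) ^ 2.
Proof. intros HX HS. unfold h3.
  assert (HS'' : d1 / X * (d1 / X) + d3 * d3 = (d1 / X) ^ 2 + d3 ^ 2) by ring.
  rewrite HS''. set (s := (d1 / X) ^ 2 + d3 ^ 2) in *. field. auto. Qed.

Lemma case3_der X d1 d3 dd1 dd3 e3 : X <> 0 -> (d1 / X) ^ 2 + d3 ^ 2 <> 0 ->
  ex_derive (h3 X d1 d3 dd1 dd3 e3) 0.
Proof. intros HX HS. unfold h3.
  assert (HS'' : d1 / X * (d1 / X) + d3 * d3 = (d1 / X) ^ 2 + d3 ^ 2) by ring.
  rewrite HS''. set (s := (d1 / X) ^ 2 + d3 ^ 2) in *.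
  auto_derive. repeat first [split | apply Rmult_integral_contrapositive]; auto; lra. Qed.
Theorem lemma2p6 (g1 g2 g3 : R -> R) (a b t : R) :
  (* gamma takes values in G *)
  (forall s, a <= s <= b -> 0 < g1 s) ->
  (* Euclidean C^2 smoothness on [a,b] *)
  (forall s, a <= s <= b ->
     ex_derive g1 s /\ ex_derive g2 s /\ ex_derive g3 s /\
     ex_derive (Derive g1) s /\ ex_derive (Derive g2) s /\
     ex_derive (Derive g3) s /\
     continuous (Derive (Derive g1)) s /\ continuous (Derive (Derive g2)) s /\
     continuous (Derive (Derive g3)) s) ->
  (* regularity *)
  (forall s, a <= s <= b ->
     ~ (Derive g1 s = 0 /\ Derive g2 s = 0 /\ Derive g3 s = 0)) ->
  a <= t <= b ->
  let d1 := Derive g1 t in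
  let d2 := Derive g2 t in
  let d3 := Derive g3 t in
  let dd1 := Derive (Derive g1) t in
  let dd3 := Derive (Derive g3) t in
  let w := omv g1 g2 g3 t in
  let dw := Derive (omv g1 g2 g3) t in
  let S := (d1 / g1 t) ^ 2 + d3 ^ 2 in
  (w <> 0 ->
     is_lim (fun L => kL L g1 g2 g3 t) p_infty
       (sqrt (d1 ^ 2 + d2 ^ 2) / (Rabs (g1 t) * Rabs w)))
  /\
  (w = 0 -> dw = 0 ->
     is_lim (fun L => kL L g1 g2 g3 t) p_infty
       (sqrt ((((dd1 * g1 t - d1 ^ 2) / g1 t ^ 2) ^ 2 + dd3 ^ 2) / S ^ 2
              - ((dd1 * d1 * g1 t - d1 ^ 3) / g1 t ^ 3 + d3 * dd3) ^ 2
                / S ^ 3)))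
  /\
  (w = 0 -> dw <> 0 ->
     is_lim (fun L => kL L g1 g2 g3 t / sqrt L) p_infty (Rabs dw / S)).
Proof.
  intros Hpos Hsm Hreg Ht d1 d2 d3 dd1 dd3 w dw S.
  assert (HX : 0 < g1 t) by auto.
  assert (HX' : g1 t <> 0) by lra.
  destruct (Hsm t Ht) as (E1 & E2 & E3 & E4 & E5 & E6 & _).
  set (dd2 := Derive (Derive g2) t).
  assert (Hdw : dw = dd2 / g1 t - d1 * d2 / g1 t ^ 2 - dd3).
  { unfold dw. apply is_derive_unique. unfold omv.
    pose proof (is_derive_minus _ _ _ _ _ (is_derive_div _ _ _ _ _ (Derive_correct _ _ E5) (Derive_correct _ _ E1) HX') (Derive_correct _ _ E6)) as P.
    assert (Q : dd2 / g1 t - d1 * d2 / g1 t ^ 2 - dd3 =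
      minus ((Derive (Derive g2) t * g1 t - Derive g2 t * Derive g1 t) / g1 t ^ 2) (Derive (Derive g3) t)).
    { unfold minus, plus, opp; simpl. unfold dd2, d1, d2, dd3. field. auto. }
    rewrite Q. exact P. }
  assert (Hw : w = d2 / g1 t - d3) by reflexivity.
  assert (Hk : forall L, 0 < L -> kL L g1 g2 g3 t = sqrt (Nf L (g1 t) d1 d2 d3 dd1 dd2 dd3)).
  { intros L HL. apply kL_formula; auto. }
  assert (HS : w = 0 -> 0 < S).
  { intros Hw0. unfold S.
    assert (0 <= (d1 / g1 t) ^ 2) by (rewrite <- Rsqr_pow2; apply Rle_0_sqr).
    assert (0 <= d3 ^ 2) by (rewrite <- Rsqr_pow2; apply Rle_0_sqr).
    destruct (Rle_lt_or_eq_dec 0 ((d1 / g1 t) ^ 2 + d3 ^ 2)) as [Hlt|Heq]; [lra|exact Hlt|].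
    exfalso. apply (Hreg t Ht).
    assert (Ha : d1 / g1 t = 0) by nra. assert (Hb : d3 = 0) by nra.
    assert (Hd1 : d1 = 0) by (replace d1 with ((d1 / g1 t) * g1 t) by (field; auto); rewrite Ha; ring).
    assert (Hd2 : d2 = 0) by (replace d2 with ((d2 / g1 t) * g1 t) by (field; auto); replace (d2 / g1 t) with 0 by lra; ring).
    repeat split; assumption. }
  split; [|split].
  - intros Hw0.
    assert (Hw1 : d2 / g1 t - d3 <> 0) by (rewrite <- Hw; exact Hw0).
    apply is_lim_ext_loc with (fun L => sqrt (Nf L (g1 t) d1 d2 d3 dd1 dd2 dd3)).
    { exists 0. intros L HL. symmetry. now apply Hk. }
    replace (sqrt (d1 ^ 2 + d2 ^ 2) / (Rabs (g1 t) * Rabs w))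
      with (sqrt (h1 (g1 t) d1 d2 d3 dd1 dd2 dd3 0)).
    + apply lim_inv_sqrt.
      * intros L HL. apply case1_eq; auto.
      * apply case1_der; auto.
      * rewrite case1_h0 by auto. apply Rmult_le_pos.
        -- assert (0 <= d1 ^ 2) by (rewrite <- Rsqr_pow2; apply Rle_0_sqr).
           assert (0 <= d2 ^ 2) by (rewrite <- Rsqr_pow2; apply Rle_0_sqr). lra.
        -- apply Rlt_le, Rinv_0_lt_compat. rewrite <- Rsqr_pow2. apply Rsqr_pos_lt.
           apply Rmult_integral_contrapositive; auto.
    + rewrite case1_h0 by auto. rewrite sqrt_div_alt.
      * rewrite <- (Rsqr_pow2 (g1 t * (d2 / g1 t - d3))), sqrt_Rsqr_abs, Rabs_mult, <- Hw. reflexivity.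
      * rewrite <- Rsqr_pow2. apply Rsqr_pos_lt. apply Rmult_integral_contrapositive; auto.
  - intros Hw0 Hdw0.
    assert (HS0 := HS Hw0). assert (HS1 : 0 < (d1 / g1 t) ^ 2 + d3 ^ 2) by exact HS0.
    apply is_lim_ext_loc with (fun _ => sqrt ((((dd1 * g1 t - d1 ^ 2) / g1 t ^ 2) ^ 2 + dd3 ^ 2) / S ^ 2
              - ((dd1 * d1 * g1 t - d1 ^ 3) / g1 t ^ 3 + d3 * dd3) ^ 2 / S ^ 3)).
    { exists 0. intros L HL. rewrite Hk by auto. f_equal. unfold S. symmetry. apply case2_eq; auto.
      all: first [exact Hw0 | (rewrite Hdw in Hdw0; exact Hdw0) | lra]. }
    apply is_lim_const.
  - intros Hw0 Hdw0.
    assert (HS0 := HS Hw0). assert (HS1 : 0 < (d1 / g1 t) ^ 2 + d3 ^ 2) by exact HS0.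
    apply is_lim_ext_loc with (fun L => sqrt (Nf L (g1 t) d1 d2 d3 dd1 dd2 dd3 / L)).
    { exists 0. intros L HL. rewrite Hk by auto. rewrite sqrt_div_alt by auto. reflexivity. }
    replace (Rabs dw / S) with (sqrt (h3 (g1 t) d1 d3 dd1 dd3 dw 0)).
    + apply lim_inv_sqrt.
      * intros L HL. rewrite Hdw. apply case3_eq; auto; first [exact Hw0 | lra].
      * apply case3_der; auto. lra.
      * rewrite case3_h0 by (auto; lra). rewrite <- Rsqr_pow2. apply Rle_0_sqr.
    + rewrite case3_h0 by (auto; lra). rewrite <- Rsqr_pow2, sqrt_Rsqr_abs.
      fold S. rewrite Rabs_div by lra. rewrite (Rabs_right S) by lra. reflexivity.
Qed.
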